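(* Let $0<s\le t$ be integers. Then $S_{s,t}=\mathbb{F}_q[x,y]_{s+t}\setminus\mathrm{Im}\,\Phi_{s,t}$.
   Context: $\mathbb{F}_q[x]_{\le s}$ is the set of polynomials in $\mathbb{F}_q[x]$ of degree at most $s$; $\mathbb{F}_q[x,y]_s$ is the space of homogeneous polynomials of degree $s$ in $x,y$ together with $0$. For $p\in\mathbb{F}_q[x,y]_s$, $p_x(x)=p(x,1)$ is its dehomogenization. $\Phi_{s,t}:\mathbb{F}_q[x,y]_s\times\mathbb{F}_q[x,y]_t\to\mathbb{F}_q[x,y]_{s+t}$ is $(f,h)\mapsto fh$, and \[ S_{s,t}=\Big\{p\in\mathbb{F}_q[x,y]_{s+t}:\ \text{if } f\in\mathbb{F}_q[x]_{\le s}\text{ divides }p_x,\ \text{then }\deg\big(p_x/f\big)\ge t+1\Big\}. \] *)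

(* Defs.v *)
From HB Require Import structures.
From mathcomp Require Import all_boot all_algebra all_field.
From mathcomp Require Import mpoly.
Set Implicit Arguments. Unset Strict Implicit. Unset Printing Implicit Defensive.
Import GRing.Theory.
Local Open Scope ring_scope.

(* Bivariate polynomials in x = 'X_0 and y = 'X_1 over a field F are
   {mpoly F[2]}; F[x,y]_s is the set of p with p \is s.-homog (0 included). *)

(* Dehomogenization p_x(x) = p(x,1) : x |-> 'X, y |-> 1. *)
Definition dehom (F : fieldType) (p : {mpoly F[2]}) : {poly F} :=
  mmap (@polyC F) (fun i : 'I_2 => if i == 0 then 'X else 1) p.

(* S_{s,t}: p of degree s+t such that every f in F[x]_{<= s} dividing p_x
   has deg (p_x / f) >= t+1, i.e. size (p_x %/ f) >= t+2. *)
Definition S_set (F : fieldType) (s t : nat) (p : {mpoly F[2]}) : Prop :=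
  p \is (s + t)%N.-homog /\
  forall f : {poly F}, (size f <= s.+1)%N -> (f %| dehom p)%R ->
    (t.+2 <= size (dehom p %/ f)%R)%N.

Definition Im_Phi (F : fieldType) (s t : nat) (p : {mpoly F[2]}) : Prop :=
  exists f h : {mpoly F[2]}, [/\ f \is s.-homog, h \is t.-homog & p = f * h].

(* Main.v *)
Require Import Defs.
From HB Require Import structures.
From mathcomp Require Import all_boot all_algebra all_field.
From mathcomp Require Import mpoly.
From mathcomp Require Import zify.
Import GRing.Theory.
Local Open Scope ring_scope.

Section Hom.
Variable F : fieldType.

Definition mon (d i : nat) : 'X_{1..2} :=
  [multinom (if j == 0%N :> nat then i else (d - i)%N) | j < 2].

Definition hom (d : nat) (q : {poly F}) : {mpoly F[2]} :=
  \sum_(i < d.+1) q`_i *: 'X_[mon d i].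

Lemma mdeg_mon d i : (i <= d)%N -> mdeg (mon d i) = d.
Proof.
move=> hi; rewrite mdegE big_ord_recr big_ord_recr big_ord0 /= !mnmE /=; lia.
Qed.

Lemma hom_homog d q : hom d q \is d.-homog.
Proof.
apply: rpred_sum => i _; apply: rpredZ.
rewrite dhomogX; apply/eqP; apply: mdeg_mon; rewrite -ltnS; exact: ltn_ord.
Qed.

Lemma hom0 d : hom d 0 = 0.
Proof. by rewrite /hom big1 // => i _; rewrite coef0 scale0r. Qed.

Lemma homD d p q : hom d (p + q) = hom d p + hom d q.
Proof. by rewrite /hom -big_split; apply: eq_bigr => i _; rewrite coefD scalerDl. Qed.

Lemma homZ d c q : hom d (c *: q) = c *: hom d q.
Proof. by rewrite /hom scaler_sumr; apply: eq_bigr => i _; rewrite coefZ scalerA. Qed.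

Lemma hom_sum d (I : Type) (r : seq I) (P : pred I) (G : I -> {poly F}) :
  hom d (\sum_(i <- r | P i) G i) = \sum_(i <- r | P i) hom d (G i).
Proof. exact: (big_morph _ (homD d) (hom0 d)). Qed.

Lemma homXn d k : (k <= d)%N -> hom d 'X^k = 'X_[mon d k].
Proof.
move=> hk; rewrite /hom (bigD1 (Ordinal (hk : (k < d.+1)%N))) //= coefXn eqxx scale1r.
rewrite big1 ?addr0 // => i /eqP hi; rewrite coefXn.
case: eqP => [e|]; last by rewrite scale0r.
by exfalso; apply: hi; apply: val_inj.
Qed.

Lemma poly_exp n (q : {poly F}) : (size q <= n.+1)%N ->
  q = \sum_(i < n.+1) q`_i *: 'X^i.
Proof.
move=> hs; rewrite -poly_def; apply/polyP => k; rewrite coef_poly.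
case: ltnP => // hk; rewrite nth_default //; exact: leq_trans hs hk.
Qed.

Lemma mon_add s t i j : (i <= s)%N -> (j <= t)%N ->
  (mon s i + mon t j)%MM = mon (s + t) (i + j).
Proof.
move=> hi hj; apply/mnmP => k; rewrite mnmDE !mnmE.
by case: (k == 0%N :> nat) => /=; lia.
Qed.

Lemma hom_mul s t (f g : {poly F}) : (size f <= s.+1)%N -> (size g <= t.+1)%N ->
  hom s f * hom t g = hom (s + t) (f * g).
Proof.
move=> hf hg.
rewrite [in RHS](@poly_exp _ f hf) [in RHS](@poly_exp _ g hg).
rewrite [hom s f]/hom [hom t g]/hom mulr_suml [in RHS]mulr_suml hom_sum.
apply: eq_bigr => i _; rewrite mulr_sumr [in RHS]mulr_sumr hom_sum.
apply: eq_bigr => j _.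
rewrite -scalerAl -scalerAr scalerA -scalerAl -scalerAr scalerA -exprD homZ.
rewrite homXn; last by have := ltn_ord i; have := ltn_ord j; lia.
by rewrite -mpolyXD mon_add // -ltnS.
Qed.

Lemma mdeg2 (m : 'X_{1..2}) : mdeg m = (m ord0 + m ord_max)%N.
Proof.
rewrite mdegE big_ord_recr big_ord_recr big_ord0 /= add0n.
by have -> : widen_ord (leqnSn 1) ord_max = ord0 :> 'I_2 by apply: val_inj.
Qed.

Lemma dehomE (p : {mpoly F[2]}) :
  dehom p = \sum_(m <- msupp p) p@_m *: 'X^(m ord0).
Proof.
rewrite /dehom /mmap; apply: eq_bigr => m _.
rewrite /mmap1 big_ord_recr big_ord_recr big_ord0 /= expr1n mulr1 mul1r mul_polyC.
by have -> : widen_ord (leqnSn 1) ord_max = ord0 :> 'I_2 by apply: val_inj.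
Qed.

Lemma size_dehom d (p : {mpoly F[2]}) : p \is d.-homog ->
  (size (dehom p) <= d.+1)%N.
Proof.
move=> /dhomogP hp; rewrite dehomE big_seq.
apply: (big_ind (fun q : {poly F} => size q <= d.+1)%N).
- by rewrite size_poly0.
- by move=> a b ha hb; rewrite (leq_trans (size_add _ _)) // geq_max ha hb.
move=> m hm; rewrite (leq_trans (size_scale_leq _ _)) // size_polyXn ltnS.
have := hp m hm; rewrite /= mdeg2; lia.
Qed.

Lemma hom_dehom d (p : {mpoly F[2]}) : p \is d.-homog ->
  hom d (dehom p) = p.
Proof.
move=> /dhomogP hp; rewrite dehomE hom_sum [RHS]mpolyE !big_seq.
apply: eq_bigr => m hm; rewrite homZ.
have := hp m hm; rewrite /= mdeg2 => hd.
rewrite homXn; last by lia.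
congr (_ *: 'X_[_]); apply/mnmP => k; rewrite mnmE.
case: k => [[|[|k]] hk] //=.
- by congr (m _); apply: val_inj.
- have -> : Ordinal hk = ord_max by apply: val_inj.
  lia.
Qed.

End Hom.
Arguments size_dehom {F d p}.
Arguments hom_dehom {F d p}.
Arguments hom_homog {F}.
Arguments hom_mul {F s t f g}.

Theorem lemma3p16 (F : finFieldType) (s t : nat) :
  (0 < s)%N -> (s <= t)%N ->
  forall p : {mpoly F[2]},
    S_set s t p <-> (p \is (s + t)%N.-homog /\ ~ Im_Phi s t p).
Proof.
move=> _ _ p; split.
- case=> hp hS; split=> // -[f [h [hf hh ep]]].
  have hm : dehom p = dehom f * dehom h by rewrite ep /dehom rmorphM.
  have := hS (dehom f) (size_dehom hf).
  rewrite hm dvdp_mulIl => /(_ isT).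
  have [->|nz] := eqVneq (dehom f) 0.
    by rewrite mul0r div0p size_poly0.
  rewrite mulKp // leqNgt ltnS size_dehom //.
- case=> hp nIm; split=> // f hf dv.
  case: leqP => // hg; exfalso; apply: nIm.
  exists (@hom F s f), (@hom F t (dehom p %/ f)); split; try exact: hom_homog.
  rewrite hom_mul // mulrC divpK //; exact/esym/hom_dehom.
Qed.
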